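(* Let $A\in\mathbb{R}^{n\times n}$, $B\in\mathbb{R}^{n\times r}$, $j_{\max}\ge1$, $0<\varepsilon<1$, and shifts $\alpha_1,\ldots,\alpha_{j_{\max}}\in\mathbb{C}$ with $\mathrm{Re}(\alpha_j)<0$, $A+\alpha_jI$ nonsingular, and $\|\mathcal{C}_j\|<1$ for $j=1,\ldots,j_{\max}$. Run the inexact LR-ADI iteration (with $M=I$) of the context, and suppose that for all $1\le k\le j_{\max}$ $$\|s_k\|\le\tfrac12\Big(\sqrt{\|w_{k-1}\|^2+\tfrac{2\varepsilon}{\sigma_k\gamma_k^2j_{\max}}}-\|w_{k-1}\|\Big),\qquad \sigma_k:=\|(A+\alpha_kI)^{-1}\|.$$ Then $\|\mathcal{R}^{\mathrm{true}}_{j_{\max}}\|\le\|\mathcal{R}^{\mathrm{exact}}_{j_{\max}}\|+2\varepsilon$.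
   Context: $\mathcal{C}_k:=(A+\alpha_kI)^{-1}(A-\overline{\alpha_k}I)$. Inexact LR-ADI iteration: $w_0:=B$, $\gamma_k:=\sqrt{-2\,\mathrm{Re}(\alpha_k)}$; $v_k$ arbitrary with $s_k:=w_{k-1}-(A+\alpha_kI)v_k$, $w_k:=w_{k-1}+\gamma_k^2v_k$, $Z_k:=[\gamma_1v_1,\ldots,\gamma_kv_k]$. True residual $\mathcal{R}^{\mathrm{true}}_k:=AZ_kZ_k^*+Z_kZ_k^*A^*+BB^*$. Exact LR-ADI residual (all $s_k=0$, same shifts): $\mathcal{R}^{\mathrm{exact}}_k:=w^{\mathrm{exact}}_k(w^{\mathrm{exact}}_k)^*$ with $w^{\mathrm{exact}}_k:=\mathcal{C}_k\cdots\mathcal{C}_1B$. Norms are spectral. *)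

(* Defs.v *)
From HB Require Import structures.
From mathcomp Require Import all_boot all_order all_algebra.
From mathcomp Require Import all_classical all_reals.
From mathcomp Require Import complex.
Set Implicit Arguments. Unset Strict Implicit. Unset Printing Implicit Defensive.
Import Order.TTheory GRing.Theory Num.Theory.
Local Open Scope ring_scope.
Local Open Scope complex_scope.

Definition cmod2 {R : realType} (z : R[i]) : R := complex.Re z ^+ 2 + complex.Im z ^+ 2.

Definition vnorm2 {R : realType} {p : nat} (x : 'cV[R[i]]_p) : R :=
  Num.sqrt (\sum_(i < p) cmod2 (x i 0)).

Definition specnorm {R : realType} {m p : nat} (M : 'M[R[i]]_(m, p)) : R :=
  sup [set vnorm2 (M *m x) | x in [set x : 'cV[R[i]]_p | vnorm2 x <= 1]]%classic.

Definition cmx {R : realType} {m p : nat} (M : 'M[R]_(m, p)) : 'M[R[i]]_(m, p) :=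
  map_mx (fun x => x%:C) M.
Definition ctr {R : realType} {m p : nat} (M : 'M[R[i]]_(m, p)) : 'M[R[i]]_(p, m) :=
  (map_mx conjc M)^T.

Definition cayley {R : realType} {n : nat} (A : 'M[R[i]]_n) (a : R[i]) : 'M[R[i]]_n :=
  invmx (A + a%:M) *m (A - (a^*)%:M).

Definition gamr {R : realType} (a : R[i]) : R := Num.sqrt (- 2 * complex.Re a).
Definition gam {R : realType} (a : R[i]) : R[i] := (gamr a)%:C.

(* inexact LR-ADI: w_0 = B, w_k = w_{k-1} + gamma_k^2 v_k  (shifts/iterates indexed from 1) *)
Fixpoint adi_w {R : realType} {n r : nat} (B : 'M[R[i]]_(n, r))
  (alpha : nat -> R[i]) (v : nat -> 'M[R[i]]_(n, r)) (k : nat) : 'M[R[i]]_(n, r) :=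
  match k with
  | 0 => B
  | k'.+1 => adi_w B alpha v k' + (gam (alpha k) ^+ 2) *: v k
  end.

Definition adi_s {R : realType} {n r : nat} (A : 'M[R[i]]_n) (B : 'M[R[i]]_(n, r))
  (alpha : nat -> R[i]) (v : nat -> 'M[R[i]]_(n, r)) (k : nat) : 'M[R[i]]_(n, r) :=
  adi_w B alpha v k.-1 - (A + (alpha k)%:M) *m v k.

Definition adi_Z {R : realType} {n r : nat} (alpha : nat -> R[i])
  (v : nat -> 'M[R[i]]_(n, r)) (k : nat) : 'M[R[i]]_(n, \sum_(j < k) r) :=
  \mxrow_(j < k) (gam (alpha j.+1) *: v j.+1).

Definition res_true {R : realType} {n r : nat} (A : 'M[R[i]]_n) (B : 'M[R[i]]_(n, r))
  (alpha : nat -> R[i]) (v : nat -> 'M[R[i]]_(n, r)) (k : nat) : 'M[R[i]]_n :=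
  let Z := adi_Z alpha v k in
  A *m (Z *m ctr Z) + (Z *m ctr Z) *m ctr A + B *m ctr B.

Fixpoint w_exact {R : realType} {n r : nat} (A : 'M[R[i]]_n) (B : 'M[R[i]]_(n, r))
  (alpha : nat -> R[i]) (k : nat) : 'M[R[i]]_(n, r) :=
  match k with
  | 0 => B
  | k'.+1 => cayley A (alpha k) *m w_exact A B alpha k'
  end.

Definition res_exact {R : realType} {n r : nat} (A : 'M[R[i]]_n) (B : 'M[R[i]]_(n, r))
  (alpha : nat -> R[i]) (k : nat) : 'M[R[i]]_n :=
  w_exact A B alpha k *m ctr (w_exact A B alpha k).

(* Main.v *)
Require Import Defs.
From HB Require Import structures.
From mathcomp Require Import all_boot all_order all_algebra.
From mathcomp Require Import all_classical all_reals.
From mathcomp Require Import complex.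
From mathcomp Require Import ring lra.
Import Order.TTheory GRing.Theory Num.Theory.
Local Open Scope ring_scope.
Local Open Scope complex_scope.
Section Vec.
Variable R : realType.
Implicit Types (t : R) (c z : R[i]).

Lemma ReM c z : complex.Re (c * z) = complex.Re c * complex.Re z - complex.Im c * complex.Im z.
Proof. by case: c => a b; case: z => x y. Qed.
Lemma ImM c z : complex.Im (c * z) = complex.Re c * complex.Im z + complex.Im c * complex.Re z.
Proof. by case: c => a b; case: z => x y. Qed.
Lemma ReD c z : complex.Re (c + z) = complex.Re c + complex.Re z.
Proof. by case: c => a b; case: z => x y. Qed.
Lemma ImD c z : complex.Im (c + z) = complex.Im c + complex.Im z.
Proof. by case: c => a b; case: z => x y. Qed.
Lemma ReN c : complex.Re (- c) = - complex.Re c.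
Proof. by case: c. Qed.
Lemma ImN c : complex.Im (- c) = - complex.Im c.
Proof. by case: c. Qed.
Lemma ReJ c : complex.Re (c^*) = complex.Re c.
Proof. by case: c. Qed.
Lemma ImJ c : complex.Im (c^*) = - complex.Im c.
Proof. by case: c. Qed.
Lemma ReC t : complex.Re (t%:C) = t. Proof. by []. Qed.
Lemma ImC t : complex.Im (t%:C) = 0. Proof. by []. Qed.
Lemma Re0 : complex.Re (0 : R[i]) = 0. Proof. by []. Qed.
Lemma Im0 : complex.Im (0 : R[i]) = 0. Proof. by []. Qed.

Lemma cmod2M c z : cmod2 (c * z) = cmod2 c * cmod2 z.
Proof. rewrite /cmod2 ReM ImM; ring. Qed.
Lemma cmod2_ge0 c : 0 <= cmod2 c.
Proof. by rewrite /cmod2 addr_ge0 // sqr_ge0. Qed.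

Definition rdot {p} (x y : 'cV[R[i]]_p) : R :=
  \sum_(i < p) (complex.Re (x i 0) * complex.Re (y i 0) + complex.Im (x i 0) * complex.Im (y i 0)).

Lemma rdotC {p} (x y : 'cV[R[i]]_p) : rdot x y = rdot y x.
Proof. by apply: eq_bigr => i _; rewrite mulrC [X in _ + X]mulrC. Qed.
Lemma rdotDr {p} (x y z : 'cV[R[i]]_p) : rdot x (y + z) = rdot x y + rdot x z.
Proof. rewrite /rdot -big_split /=; apply: eq_bigr => i _; rewrite !mxE ReD ImD. ring. Qed.
Lemma rdotNr {p} (x y : 'cV[R[i]]_p) : rdot x (- y) = - rdot x y.
Proof. rewrite /rdot -sumrN; apply: eq_bigr => i _; rewrite !mxE ReN ImN; ring. Qed.
Lemma rdotBr {p} (x y z : 'cV[R[i]]_p) : rdot x (y - z) = rdot x y - rdot x z.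
Proof. by rewrite rdotDr rdotNr. Qed.
Lemma rdotZr {p} t (x y : 'cV[R[i]]_p) : rdot x (t%:C *: y) = t * rdot x y.
Proof. rewrite /rdot mulr_sumr; apply: eq_bigr => i _; rewrite !mxE ReM ImM /=; ring. Qed.
Lemma rdotDl {p} (x y z : 'cV[R[i]]_p) : rdot (y + z) x = rdot y x + rdot z x.
Proof. by rewrite rdotC rdotDr rdotC [rdot x z]rdotC. Qed.
Lemma rdotNl {p} (x y : 'cV[R[i]]_p) : rdot (- y) x = - rdot y x.
Proof. by rewrite rdotC rdotNr rdotC. Qed.
Lemma rdotBl {p} (x y z : 'cV[R[i]]_p) : rdot (y - z) x = rdot y x - rdot z x.
Proof. by rewrite rdotDl rdotNl. Qed.
Lemma rdotZl {p} t (x y : 'cV[R[i]]_p) : rdot (t%:C *: y) x = t * rdot y x.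
Proof. by rewrite rdotC rdotZr rdotC. Qed.

Lemma rdotxx {p} (x : 'cV[R[i]]_p) : rdot x x = \sum_(i < p) cmod2 (x i 0).
Proof. by apply: eq_bigr => i _; rewrite /cmod2 !expr2. Qed.
Lemma rdotxx_ge0 {p} (x : 'cV[R[i]]_p) : 0 <= rdot x x.
Proof. by rewrite rdotxx sumr_ge0 // => i _; exact: cmod2_ge0. Qed.
Lemma vnorm2E {p} (x : 'cV[R[i]]_p) : vnorm2 x = Num.sqrt (rdot x x).
Proof. by rewrite rdotxx. Qed.
Lemma vnorm2_ge0 {p} (x : 'cV[R[i]]_p) : 0 <= vnorm2 x.
Proof. exact: sqrtr_ge0. Qed.
Lemma vnorm2_sq {p} (x : 'cV[R[i]]_p) : vnorm2 x ^+ 2 = rdot x x.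
Proof. by rewrite vnorm2E sqr_sqrtr // rdotxx_ge0. Qed.

Lemma rdotxx_eq0 {p} (x : 'cV[R[i]]_p) : rdot x x = 0 -> x = 0.
Proof.
rewrite rdotxx => /eqP; rewrite psumr_eq0; last by move=> i _; exact: cmod2_ge0.
move=> /allP H; apply/matrixP => i j; rewrite (ord1 j) mxE.
have /H /= /eqP : i \in index_enum 'I_p by rewrite mem_index_enum.
rewrite /cmod2 => /eqP; rewrite paddr_eq0 ?sqr_ge0 // !sqrf_eq0 => /andP[/eqP a /eqP b].
by case: (x i 0) a b => u w /= -> ->.
Qed.

Lemma vnorm2_eq0 {p} (x : 'cV[R[i]]_p) : vnorm2 x = 0 -> x = 0.
Proof.
move=> H; apply: rdotxx_eq0; move: (vnorm2_sq x); rewrite H expr0n /= => <-.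
by [].
Qed.

Lemma rdot0r {p} (x : 'cV[R[i]]_p) : rdot x 0 = 0.
Proof. by rewrite /rdot big1 // => i _; rewrite mxE; ring. Qed.
Lemma rdot0l {p} (x : 'cV[R[i]]_p) : rdot 0 x = 0.
Proof. by rewrite rdotC rdot0r. Qed.

Lemma CS {p} (x y : 'cV[R[i]]_p) : rdot x y <= vnorm2 x * vnorm2 y.
Proof.
set a := vnorm2 x; set b := vnorm2 y.
have a0 : 0 <= a by exact: vnorm2_ge0.
have b0 : 0 <= b by exact: vnorm2_ge0.
have [a_0|apos] := eqVneq a 0.
  by rewrite a_0 mul0r; move: a_0 => /vnorm2_eq0 ->; rewrite rdot0l.
have [b_0|bpos] := eqVneq b 0.
  by rewrite b_0 mulr0; move: b_0 => /vnorm2_eq0 ->; rewrite rdot0r.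
have H := rdotxx_ge0 (b%:C *: x - a%:C *: y).
rewrite !(rdotBl, rdotBr, rdotZl, rdotZr) -!vnorm2_sq -/a -/b (rdotC y x) in H.
have ab : 0 < a * b by rewrite mulr_gt0 // lt_def ?apos ?bpos.
rewrite -(ler_pM2l ab); nra.
Qed.

Lemma vnorm2D {p} (x y : 'cV[R[i]]_p) : vnorm2 (x + y) <= vnorm2 x + vnorm2 y.
Proof.
rewrite -(ler_pXn2r (_ : (0 < 2)%N)) ?nnegrE ?addr_ge0 ?vnorm2_ge0 //.
rewrite vnorm2_sq rdotDl !rdotDr (rdotC y x) sqrrD -!vnorm2_sq.
have := CS x y; lra.
Qed.

Lemma vnorm2Z {p} c (x : 'cV[R[i]]_p) : vnorm2 (c *: x) = Num.sqrt (cmod2 c) * vnorm2 x.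
Proof.
rewrite /vnorm2 -sqrtrM ?cmod2_ge0 // mulr_sumr; congr Num.sqrt.
by apply: eq_bigr => i _; rewrite mxE cmod2M.
Qed.

Lemma vnorm2Zr {p} t (x : 'cV[R[i]]_p) : vnorm2 (t%:C *: x) = `|t| * vnorm2 x.
Proof. by rewrite vnorm2Z /cmod2 /= expr0n /= addr0 sqrtr_sqr. Qed.

Lemma vnorm2N {p} (x : 'cV[R[i]]_p) : vnorm2 (- x) = vnorm2 x.
Proof. have -> : - x = (-1 : R)%:C *: x by rewrite rmorphN1 scaleN1r. by rewrite vnorm2Zr normrN1 mul1r. Qed.

Lemma vnorm20 {p} : vnorm2 (0 : 'cV[R[i]]_p) = 0.
Proof. by rewrite vnorm2E rdot0r sqrtr0. Qed.

Lemma vnorm2_sum {p} (I : finType) (f : I -> 'cV[R[i]]_p) :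
  vnorm2 (\sum_i f i) <= \sum_i vnorm2 (f i).
Proof.
apply: (big_ind2 (fun a b => vnorm2 a <= b)); first by rewrite vnorm20.
  by move=> a b c d h1 h2; apply: le_trans (vnorm2D _ _) _; exact: lerD.
by [].
Qed.

Lemma entry_le {p} (x : 'cV[R[i]]_p) i : Num.sqrt (cmod2 (x i 0)) <= vnorm2 x.
Proof.
rewrite ler_sqrt; last by rewrite sumr_ge0 // => j _; exact: cmod2_ge0.
rewrite (bigD1 i) //= lerDl sumr_ge0 // => j _; exact: cmod2_ge0.
Qed.


Lemma mulmx_col_decomp {m p} (M : 'M[R[i]]_(m,p)) (x : 'cV[R[i]]_p) :
  M *m x = \sum_(j < p) (x j 0) *: col j M.
Proof.
apply/matrixP => i k; rewrite (ord1 k) !mxE summxE; apply: eq_bigr => j _.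
by rewrite !mxE mulrC.
Qed.

Lemma mx_bound {m p} (M : 'M[R[i]]_(m,p)) :
  exists K, 0 <= K /\ forall x, vnorm2 (M *m x) <= K * vnorm2 x.
Proof.
exists (\sum_(j < p) vnorm2 (col j M)); split.
  by rewrite sumr_ge0 // => j _; exact: vnorm2_ge0.
move=> x; rewrite mulmx_col_decomp; apply: le_trans (vnorm2_sum _ _) _.
rewrite mulr_suml; apply: ler_sum => j _; rewrite vnorm2Z.
by rewrite mulrC ler_wpM2l ?vnorm2_ge0 ?entry_le.
Qed.

Definition snset {m p} (M : 'M[R[i]]_(m,p)) :=
  [set vnorm2 (M *m x) | x in [set x : 'cV[R[i]]_p | vnorm2 x <= 1]]%classic.

Lemma snset_ne {m p} (M : 'M[R[i]]_(m,p)) : (snset M !=set0)%classic.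
Proof. exists 0; exists 0; rewrite /= ?vnorm20 ?mulmx0 ?vnorm20 //. Qed.

Lemma snset_ub {m p} (M : 'M[R[i]]_(m,p)) : has_ubound (snset M).
Proof.
have [K [K0 HK]] := mx_bound M; exists K => y [x /= hx <-].
apply: le_trans (HK x) _; by rewrite ler_piMr.
Qed.

Lemma specnorm_ge0 {m p} (M : 'M[R[i]]_(m,p)) : 0 <= specnorm M.
Proof.
apply: (ub_le_sup (snset_ub M)); exists 0; rewrite /= ?vnorm20 ?ler01 //.
by rewrite mulmx0 vnorm20.
Qed.

Lemma specnorm_ub {m p} (M : 'M[R[i]]_(m,p)) x :
  vnorm2 (M *m x) <= specnorm M * vnorm2 x.
Proof.
have [x0|xn0] := eqVneq (vnorm2 x) 0.
  by move: (x0) => /vnorm2_eq0 ->; rewrite mulmx0 !vnorm20 mulr0.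
have xp : 0 < vnorm2 x by rewrite lt_def xn0 vnorm2_ge0.
set y := ((vnorm2 x)^-1)%:C *: x.
have Hy : vnorm2 y = 1 by rewrite vnorm2Zr ger0_norm ?invr_ge0 ?vnorm2_ge0 // mulVf.
have : vnorm2 (M *m y) <= specnorm M.
  apply: (ub_le_sup (snset_ub M)); exists y => //=; by rewrite Hy.
rewrite /y -scalemxAr vnorm2Zr ger0_norm ?invr_ge0 ?vnorm2_ge0 //.
by rewrite -(ler_pM2l xp) mulrA mulfV ?mul1r ?(mulrC (vnorm2 x)). 
Qed.

Lemma specnorm_le {m p} (M : 'M[R[i]]_(m,p)) K :
  0 <= K -> (forall x, vnorm2 (M *m x) <= K * vnorm2 x) -> specnorm M <= K.
Proof.
move=> K0 HK; apply: ge_sup; first exact: snset_ne.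
move=> y [x /= hx <-]; apply: le_trans (HK x) _; by rewrite ler_piMr.
Qed.



Lemma specnormD {m p} (M N : 'M[R[i]]_(m,p)) : specnorm (M + N) <= specnorm M + specnorm N.
Proof.
apply: specnorm_le; first by rewrite addr_ge0 ?specnorm_ge0.
move=> x; rewrite mulmxDl mulrDl; apply: le_trans (vnorm2D _ _) _.
by rewrite lerD ?specnorm_ub.
Qed.

Lemma specnormM {m p q} (M : 'M[R[i]]_(m,p)) (N : 'M[R[i]]_(p,q)) :
  specnorm (M *m N) <= specnorm M * specnorm N.
Proof.
apply: specnorm_le; first by rewrite mulr_ge0 ?specnorm_ge0.
move=> x; rewrite -mulmxA -mulrA; apply: le_trans (specnorm_ub _ _) _.
by rewrite ler_wpM2l ?specnorm_ge0 ?specnorm_ub.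
Qed.

Lemma specnormZr {m p} t (M : 'M[R[i]]_(m,p)) : specnorm (t%:C *: M) <= `|t| * specnorm M.
Proof.
apply: specnorm_le; first by rewrite mulr_ge0 ?specnorm_ge0.
by move=> x; rewrite -scalemxAl vnorm2Zr -mulrA ler_wpM2l ?specnorm_ub.
Qed.

Lemma specnormZrE {m p} t (M : 'M[R[i]]_(m,p)) : specnorm (t%:C *: M) = `|t| * specnorm M.
Proof.
apply/eqP; rewrite eq_le specnormZr /=.
have [->|tn0] := eqVneq t 0.
  by rewrite normr0 mul0r specnorm_ge0.
have tp : 0 < `|t| by rewrite normr_gt0.
have tip : 0 < `|t|^-1 by rewrite invr_gt0.
rewrite -(ler_pM2l tip) mulrA mulVf ?mul1r ?normr_eq0 //.
have {1}-> : M = (t^-1)%:C *: (t%:C *: M).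
  by rewrite scalerA -rmorphM mulVf // rmorph1 scale1r.
by rewrite -normfV specnormZr.
Qed.

Lemma specnormN {m p} (M : 'M[R[i]]_(m,p)) : specnorm (- M) = specnorm M.
Proof.
have -> : - M = (-1 : R)%:C *: M by rewrite rmorphN1 scaleN1r.
by rewrite specnormZrE normrN1 mul1r.
Qed.

Lemma specnormB {m p} (M N : 'M[R[i]]_(m,p)) : specnorm (M - N) <= specnorm M + specnorm N.
Proof. by rewrite -(specnormN N) specnormD. Qed.

Lemma specnorm1 {m} : specnorm (1%:M : 'M[R[i]]_m) <= 1.
Proof. by apply: specnorm_le => // x; rewrite mul1mx mul1r. Qed.

Lemma ctrE {m p} (M : 'M[R[i]]_(m,p)) i j : ctr M i j = (M j i)^*.
Proof. by rewrite /ctr !mxE. Qed.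

Lemma ctrM {m p q} (M : 'M[R[i]]_(m,p)) (N : 'M[R[i]]_(p,q)) :
  ctr (M *m N) = ctr N *m ctr M.
Proof. by rewrite /ctr map_mxM trmx_mul. Qed.
Lemma ctrD {m p} (M N : 'M[R[i]]_(m,p)) : ctr (M + N) = ctr M + ctr N.
Proof. by apply/matrixP => i j; rewrite !mxE rmorphD. Qed.
Lemma ctrN {m p} (M : 'M[R[i]]_(m,p)) : ctr (- M) = - ctr M.
Proof. by apply/matrixP => i j; rewrite !mxE rmorphN. Qed.
Lemma ctrB {m p} (M N : 'M[R[i]]_(m,p)) : ctr (M - N) = ctr M - ctr N.
Proof. by rewrite ctrD ctrN. Qed.
Lemma ctrZ {m p} c (M : 'M[R[i]]_(m,p)) : ctr (c *: M) = c^* *: ctr M.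
Proof. by apply/matrixP => i j; rewrite !mxE rmorphM. Qed.
Lemma ctrK {m p} (M : 'M[R[i]]_(m,p)) : ctr (ctr M) = M.
Proof. by apply/matrixP => i j; rewrite !mxE conjcK. Qed.
Lemma ctr_scalar {m} c : ctr (c%:M : 'M[R[i]]_m) = (c^*)%:M.
Proof. by apply/matrixP => i j; rewrite !mxE eq_sym rmorphMn. Qed.

Lemma rdotE {p} (x y : 'cV[R[i]]_p) : rdot x y = complex.Re (\sum_i (x i 0)^* * y i 0).
Proof.
rewrite (big_morph (fun z : R[i] => complex.Re z) (@ReD) (@Re0)) /rdot.
by apply: eq_bigr => i _; rewrite ReM ReJ ImJ; ring.
Qed.

Lemma rdot_adj {m p} (M : 'M[R[i]]_(m,p)) (y : 'cV[R[i]]_m) (z : 'cV[R[i]]_p) :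
  rdot y (M *m z) = rdot (ctr M *m y) z.
Proof.
rewrite !rdotE; congr complex.Re.
under eq_bigr => i _ do rewrite mxE mulr_sumr.
rewrite exchange_big /=; apply: eq_bigr => j _.
rewrite mxE rmorph_sum mulr_suml; apply: eq_bigr => i _.
have e : forall c : R[i], Num.conj c = (c^*)%C by []. by rewrite rmorphM /= ctrE !e conjcK mulrCA mulrA. Qed.

Lemma specnorm_ctr {m p} (M : 'M[R[i]]_(m,p)) : specnorm (ctr M) <= specnorm M.
Proof.
apply: specnorm_le; first exact: specnorm_ge0.
move=> y; set z := ctr M *m y.
have H : vnorm2 z ^+ 2 <= vnorm2 z * (specnorm M * vnorm2 y).
  rewrite vnorm2_sq {1}/z -rdot_adj.
  apply: le_trans (CS _ _) _.
  have -> : vnorm2 z * (specnorm M * vnorm2 y) = vnorm2 y * (specnorm M * vnorm2 z) by ring.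
  by rewrite ler_wpM2l ?vnorm2_ge0 ?specnorm_ub.
have [z0|zn0] := eqVneq (vnorm2 z) 0.
  by rewrite z0 mulr_ge0 ?specnorm_ge0 ?vnorm2_ge0.
have zp : 0 < vnorm2 z by rewrite lt_def zn0 vnorm2_ge0.
by rewrite -(ler_pM2l zp) -expr2.
Qed.

Lemma specnorm_ctrE {m p} (M : 'M[R[i]]_(m,p)) : specnorm (ctr M) = specnorm M.
Proof.
apply/eqP; rewrite eq_le specnorm_ctr /=.
by rewrite -{1}(ctrK M) specnorm_ctr.
Qed.


Lemma conjcE (c : R[i]) : Num.conj c = (c^*)%C.
Proof. by []. Qed.

Lemma step_id {n r} (A S BB : 'M[R[i]]_n) (w v : 'M[R[i]]_(n,r)) (a : R[i]) Sg :
  A *m S + S *m ctr A + BB = w *m ctr w - Sg ->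
  let G := -(a + a^*) in
  let w' := w + G *: v in let s := w - (A + a%:M) *m v in
  A *m (S + G *: (v *m ctr v)) + (S + G *: (v *m ctr v)) *m ctr A + BB
   = w' *m ctr w' - (Sg + G *: (s *m ctr v + v *m ctr s)).
Proof.
move=> IH G w' s.
have -> : A *m (S + G *: (v *m ctr v)) + (S + G *: (v *m ctr v)) *m ctr A + BB
  = (A *m S + S *m ctr A + BB) + G *: (A *m (v *m ctr v) + (v *m ctr v) *m ctr A).
  rewrite mulmxDr mulmxDl -scalemxAr -scalemxAl scalerDr.
  move: (A *m S) (A *m (v *m ctr v)) (S *m ctr A) (v *m ctr v *m ctr A) => a1 a2 a3 a4.
  by apply/matrixP => i j; rewrite !mxE; ring.
rewrite IH /w' /s; clear IH.
rewrite !(ctrD, ctrB, ctrN, ctrM, ctrZ, ctr_scalar) !(mulmxDl, mulmxDr, mulmxBl, mulmxBr, mulmxN, mulNmx).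
rewrite !mul_scalar_mx !mul_mx_scalar -!scalemxAl -!scalemxAr !mulmxA.
have GJ : conjc G = G by rewrite /G rmorphN rmorphD /= ?conjcE conjcK addrC.
rewrite ?conjcE GJ.
move: (w *m ctr w) (w *m ctr v) (v *m ctr w) (v *m ctr v) (A *m v *m ctr v) (v *m ctr v *m ctr A) Sg.
move=> X1 X2 X3 X4 X5 X6 X7.
by apply/matrixP => i j; rewrite !mxE /G; ring.
Qed.


Lemma gam2E (a : R[i]) : complex.Re a <= 0 -> gam a ^+ 2 = -(a + a^*).
Proof.
move=> ha; rewrite /gam -rmorphXn /gamr sqr_sqrtr; last by nra.
rewrite addcJ; case: a ha => x y /= ha; apply/eqP; rewrite eq_complex /=; apply/andP; split; apply/eqP; ring.
Qed.

Lemma gamJ (a : R[i]) : conjc (gam a) = gam a.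
Proof. exact: conjc_real. Qed.

Lemma ctr_mxrow {m k} (p_ : 'I_k -> nat) (B_ : forall j, 'M[R[i]]_(m, p_ j)) :
  ctr (\mxrow_j B_ j) = \mxcol_j ctr (B_ j).
Proof. by apply/matrixP => i j; rewrite !mxE. Qed.

Lemma ZZ {n r} (alpha : nat -> R[i]) (v : nat -> 'M[R[i]]_(n, r)) k :
  adi_Z alpha v k *m ctr (adi_Z alpha v k)
  = \sum_(j < k) (gam (alpha j.+1) ^+ 2) *: (v j.+1 *m ctr (v j.+1)).
Proof.
rewrite /adi_Z ctr_mxrow mul_mxrow_mxcol; apply: eq_bigr => j _.
by rewrite ctrZ ?conjcE gamJ -scalemxAl -scalemxAr scalerA expr2.
Qed.


Lemma res_id {n r} (A : 'M[R[i]]_n) (B : 'M[R[i]]_(n, r)) (alpha : nat -> R[i])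
  (v : nat -> 'M[R[i]]_(n, r)) k :
  (forall j, (1 <= j <= k)%N -> complex.Re (alpha j) <= 0) ->
  res_true A B alpha v k = adi_w B alpha v k *m ctr (adi_w B alpha v k)
   - \sum_(j < k) (gam (alpha j.+1) ^+ 2) *:
        (adi_s A B alpha v j.+1 *m ctr (v j.+1) + v j.+1 *m ctr (adi_s A B alpha v j.+1)).
Proof.
rewrite /res_true ZZ; elim: k => [|k IH] H.
  by rewrite !big_ord0 mulmx0 mul0mx add0r add0r subr0.
rewrite !big_ord_recr /=.
have Hk : complex.Re (alpha k.+1) <= 0 by apply: H; rewrite leqnn.
have IH' := IH (fun j hj => H j (ltac:(case/andP: hj => h1 h2; rewrite h1 /=; exact: leqW))).
rewrite gam2E //.
have := @step_id n r _ _ _ _ (v k.+1) (alpha k.+1) _ IH'. move=> /= ->. by [].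
Qed.


Lemma specnorm_sum {m p} (I : finType) (f : I -> 'M[R[i]]_(m,p)) :
  specnorm (\sum_i f i) <= \sum_i specnorm (f i).
Proof.
apply: (big_ind2 (fun a b => specnorm a <= b)).
- by apply: specnorm_le => // x; rewrite mul0mx vnorm20 mul0r.
- by move=> a b c d h1 h2; apply: le_trans (specnormD _ _) _; exact: lerD.
- by [].
Qed.

Lemma scalar_step (W d sg g jm e : R) : 0 <= W -> 0 <= d -> 0 <= sg -> 0 <= g ->
  0 < jm -> 0 < e ->
  d <= 2^-1 * (Num.sqrt (W ^+ 2 + 2 * e / (sg * g * jm)) - W) ->
  2 * (g * sg) * d * (W + d) <= e / jm.
Proof.
move=> W0 d0 s0 g0 jm0 e0 H.
set q := 2 * e / (sg * g * jm).
have q0 : 0 <= q by rewrite /q divr_ge0 ?mulr_ge0 // ltW.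
have h1 : 2 * d + W <= Num.sqrt (W ^+ 2 + q) by move: H; rewrite -/q; lra.
have h2 : (2 * d + W) ^+ 2 <= W ^+ 2 + q.
  rewrite -[X in _ <= X]sqr_sqrtr ?addr_ge0 ?sqr_ge0 //.
  by rewrite ler_pXn2r // ?nnegrE ?sqrtr_ge0 // addr_ge0 // mulr_ge0.
have h3 : 4 * d * (d + W) <= q by move: h2; rewrite sqrrD; nra.
have [u0|un0] := eqVneq (g * sg) 0.
  by rewrite u0 mulr0 !mul0r divr_ge0 // ltW.
have up : 0 < g * sg by rewrite lt_def un0 mulr_ge0.
have : (g * sg) * (4 * d * (d + W)) <= (g * sg) * q by rewrite ler_wpM2l // ltW.
have -> : (g * sg) * q = 2 * (e / jm).
  rewrite /q [sg * g]mulrC; field.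
  move: un0; rewrite mulf_eq0 negb_or => /andP[-> ->]; by rewrite gt_eqF.
nra.
Qed.

Lemma sc_v (g d V sg W c : R) : 0 <= g -> 0 <= d -> 0 <= V -> V <= sg * (W + d) ->
  2 * (g * sg) * d * (W + d) <= c -> g * (d * V + V * d) <= c.
Proof.
move=> g0 d0 V0 hV hc; apply: le_trans hc.
have -> : g * (d * V + V * d) = (2 * g * d) * V by ring.
have -> : 2 * (g * sg) * d * (W + d) = (2 * g * d) * (sg * (W + d)) by ring.
by rewrite ler_wpM2l // !mulr_ge0.
Qed.
Lemma sc_e (u d W c : R) : 0 <= u -> u <= 2 -> 0 <= d -> 0 <= W ->
  2 * u * d * (W + d) <= c -> 2 * W * (u * d) + (u * d) ^+ 2 <= c.
Proof.
move=> u0 u2 d0 W0 hc; apply: le_trans hc.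
have -> : 2 * u * d * (W + d) = 2 * W * (u * d) + 2 * u * d * d by ring.
rewrite lerD2l.
have -> : (u * d) ^+ 2 = u * (d * d) * u by ring.
have -> : 2 * u * d * d = u * (d * d) * 2 by ring.
by rewrite ler_wpM2l // !mulr_ge0.
Qed.

Section Main.
Variables (n r : nat) (A : 'M[R[i]]_n) (B : 'M[R[i]]_(n,r)) (alpha : nat -> R[i])
  (v : nat -> 'M[R[i]]_(n,r)).
Local Notation w := (adi_w B alpha v).
Local Notation s := (adi_s A B alpha v).
Local Notation F k := (invmx (A + (alpha k)%:M)).
Local Notation C k := (cayley A (alpha k)).
Local Notation G k := (gam (alpha k) ^+ 2).
Local Notation g k := (gamr (alpha k) ^+ 2).
Local Notation we := (w_exact A B alpha).

Lemma G_real k : G k = (g k)%:C.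
Proof. by rewrite /gam rmorphXn. Qed.

Lemma g_ge0 k : 0 <= g k.
Proof. exact: sqr_ge0. Qed.

Lemma cayleyE k : A + (alpha k)%:M \in unitmx -> complex.Re (alpha k) <= 0 ->
  C k = 1%:M + G k *: F k.
Proof.
move=> U H; rewrite gam2E // /cayley.
have -> : A - ((alpha k)^*)%:M = (A + (alpha k)%:M) - (alpha k + (alpha k)^*)%:M.
  by rewrite raddfD /= opprD addrA addrK.
by rewrite mulmxBr mulVmx // mul_mx_scalar scaleNr.
Qed.

Lemma v_eq k : A + (alpha k.+1)%:M \in unitmx -> v k.+1 = F k.+1 *m (w k - s k.+1).
Proof.
move=> U; by rewrite /adi_s /= opprB addrCA subrr addr0 mulKmx.
Qed.

Lemma w_stepE k : A + (alpha k.+1)%:M \in unitmx -> complex.Re (alpha k.+1) <= 0 ->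
  w k.+1 = C k.+1 *m w k - G k.+1 *: (F k.+1 *m s k.+1).
Proof.
move=> U H; rewrite cayleyE // /= {1}(v_eq k U) mulmxDl mul1mx -scalemxAl -addrA -scalerBr.
by rewrite -mulmxBr.
Qed.

Lemma v_norm k : A + (alpha k.+1)%:M \in unitmx ->
  specnorm (v k.+1) <= specnorm (F k.+1) * (specnorm (w k) + specnorm (s k.+1)).
Proof.
move=> U; rewrite (v_eq k U); apply: le_trans (specnormM _ _) _.
by rewrite ler_wpM2l ?specnorm_ge0 ?specnormB.
Qed.

Lemma gsig k : A + (alpha k)%:M \in unitmx -> complex.Re (alpha k) <= 0 ->
  specnorm (C k) <= 1 -> g k * specnorm (F k) <= 2.
Proof.
move=> U H HC.
have : specnorm (G k *: F k) <= 2.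
  have e : C k - 1%:M = G k *: F k by rewrite cayleyE // addrAC subrr add0r.
  rewrite -e; apply: le_trans (specnormB _ _) _.
  exact: (lerD HC (@specnorm1 n)).
by rewrite G_real specnormZrE ger0_norm ?g_ge0.
Qed.

Lemma X_step k : A + (alpha k.+1)%:M \in unitmx -> complex.Re (alpha k.+1) <= 0 ->
  forall f, f = G k.+1 *: (F k.+1 *m s k.+1) ->
  w k.+1 *m ctr (w k.+1) - we k.+1 *m ctr (we k.+1)
  = C k.+1 *m (w k *m ctr (w k) - we k *m ctr (we k)) *m ctr (C k.+1)
    - (C k.+1 *m w k) *m ctr f - f *m ctr (C k.+1 *m w k) + f *m ctr f.
Proof.
move=> U H f ef; rewrite w_stepE // -ef /=.
move: (C k.+1) => Cm.
rewrite !(ctrB, ctrM, ctrN) !(mulmxDl, mulmxDr, mulmxBl, mulmxBr, mulmxN, mulNmx) !mulmxA.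
move: (Cm *m w k *m ctr (w k) *m ctr Cm) (Cm *m w k *m ctr f)
  (f *m ctr (w k) *m ctr Cm) (f *m ctr f)
  (Cm *m we k *m ctr (we k) *m ctr Cm) => a1 a2 a3 a4 a5.
by apply/matrixP => i j; rewrite !mxE; ring.
Qed.

Lemma X_bound k : A + (alpha k.+1)%:M \in unitmx -> complex.Re (alpha k.+1) <= 0 ->
  specnorm (C k.+1) <= 1 ->
  forall a, a = g k.+1 * specnorm (F k.+1) * specnorm (s k.+1) ->
  specnorm (w k.+1 *m ctr (w k.+1) - we k.+1 *m ctr (we k.+1))
  <= specnorm (w k *m ctr (w k) - we k *m ctr (we k)) + (2 * specnorm (w k) * a + a ^+ 2).
Proof.
move=> U H HC a ea.
set f := G k.+1 *: (F k.+1 *m s k.+1).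
rewrite (X_step k U H f (erefl f)).
set D := w k *m ctr (w k) - we k *m ctr (we k).
have Cge0 := specnorm_ge0 (C k.+1).
have Wge0 := specnorm_ge0 (w k).
have fa : specnorm f <= a.
  rewrite /f G_real specnormZrE ger0_norm ?g_ge0 // ea -mulrA ler_wpM2l ?g_ge0 //.
  exact: specnormM.
have fge0 := specnorm_ge0 f.
have CW : specnorm (C k.+1 *m w k) <= specnorm (w k).
  apply: le_trans (specnormM _ _) _; rewrite -[X in _ <= X]mul1r.
  by rewrite ler_wpM2r.
have CWge0 := specnorm_ge0 (C k.+1 *m w k).
have t1 : specnorm (C k.+1 *m D *m ctr (C k.+1)) <= specnorm D.
  apply: le_trans (specnormM _ _) _; rewrite specnorm_ctrE.
  apply: le_trans (_ : specnorm (C k.+1 *m D) * 1 <= _).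
    by rewrite ler_wpM2l ?specnorm_ge0.
  rewrite mulr1; apply: le_trans (specnormM _ _) _.
  by rewrite -[X in _ <= X]mul1r ler_wpM2r ?specnorm_ge0.
have t2 : specnorm (C k.+1 *m w k *m ctr f) <= specnorm (w k) * a.
  apply: le_trans (specnormM _ _) _; rewrite specnorm_ctrE.
  exact: (ler_pM (specnorm_ge0 _) (specnorm_ge0 _) CW fa).
have t3 : specnorm (f *m ctr (C k.+1 *m w k)) <= specnorm (w k) * a.
  apply: le_trans (specnormM _ _) _; rewrite specnorm_ctrE mulrC.
  exact: (ler_pM (specnorm_ge0 _) (specnorm_ge0 _) CW fa).
have t4 : specnorm (f *m ctr f) <= a ^+ 2.
  apply: le_trans (specnormM _ _) _; rewrite specnorm_ctrE expr2.
  exact: (ler_pM (specnorm_ge0 _) (specnorm_ge0 _) fa fa).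
apply: le_trans (specnormD _ _) _.
apply: le_trans (lerD (specnormB _ _) (le_refl _)) _.
apply: le_trans (lerD (lerD (specnormB _ _) (le_refl _)) (le_refl _)) _.
apply: le_trans (lerD (lerD (lerD t1 t2) t3) t4) _.
have -> : specnorm D + specnorm (w k) * a + specnorm (w k) * a + a ^+ 2
  = specnorm D + (2 * specnorm (w k) * a + a ^+ 2) by ring.
exact: le_refl.
Qed.

Lemma main_gen jmax eps :
  (1 <= jmax)%N -> 0 < eps ->
  (forall j, (1 <= j <= jmax)%N -> [/\ complex.Re (alpha j) < 0,
       A + (alpha j)%:M \in unitmx & specnorm (C j) < 1]) ->
  (forall k, (1 <= k <= jmax)%N -> specnorm (s k) <= 2^-1 *
     (Num.sqrt (specnorm (w k.-1) ^+ 2 + 2 * eps / (specnorm (F k) * gamr (alpha k) ^+ 2 * jmax%:R))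
       - specnorm (w k.-1))) ->
  specnorm (res_true A B alpha v jmax) <= specnorm (res_exact A B alpha jmax) + 2 * eps.
Proof.
move=> hj e0 Hg Hs.
have jm0 : 0 < jmax%:R :> R by rewrite ltr0n.
set c := eps / jmax%:R.
have c0 : 0 <= c by rewrite /c divr_ge0 // ltW.
have hk1 k : (k < jmax)%N -> (1 <= k.+1 <= jmax)%N by move=> hk; rewrite ltn0Sn.
have P k : (k < jmax)%N -> 2 * (g k.+1 * specnorm (F k.+1)) * specnorm (s k.+1)
    * (specnorm (w k) + specnorm (s k.+1)) <= c.
  move=> hk; apply: scalar_step; rewrite ?specnorm_ge0 ?g_ge0 //.
  exact: (Hs k.+1 (hk1 k hk)).
have gs2 k : (k < jmax)%N -> g k.+1 * specnorm (F k.+1) <= 2.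
  move=> hk; case: (Hg k.+1 (hk1 k hk)) => h1 h2 h3; apply: gsig => //; exact: ltW.
have Hv k : (k < jmax)%N -> g k.+1 * (specnorm (s k.+1) * specnorm (v k.+1)
     + specnorm (v k.+1) * specnorm (s k.+1)) <= c.
  move=> hk; case: (Hg k.+1 (hk1 k hk)) => h1 h2 h3.
  apply: (sc_v _ _ _ _ _ _ _ _ _ (v_norm k h2) (P k hk)); rewrite ?g_ge0 ?specnorm_ge0 //.
have He k : (k < jmax)%N -> forall a, a = g k.+1 * specnorm (F k.+1) * specnorm (s k.+1) ->
    2 * specnorm (w k) * a + a ^+ 2 <= c.
  move=> hk a ea; rewrite ea.
  have u0 : 0 <= g k.+1 * specnorm (F k.+1) by rewrite mulr_ge0 ?g_ge0 ?specnorm_ge0.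
  exact: (sc_e _ _ _ _ u0 (gs2 k hk) (specnorm_ge0 _) (specnorm_ge0 _) (P k hk)).
have HX k : (k <= jmax)%N ->
    specnorm (w k *m ctr (w k) - we k *m ctr (we k)) <= k%:R * c.
  elim: k => [|k IH] hk.
    rewrite /= subrr mul0r; apply: specnorm_le => // x.
    by rewrite mul0mx vnorm20 mul0r.
  case: (Hg k.+1 (hk1 k hk)) => h1 h2 h3.
  apply: le_trans (X_bound k h2 (ltW h1) (ltW h3) _ (erefl _)) _.
  rewrite -[X in _ <= X * c]natr1 [X in _ <= X]mulrDl [X in _ <= _ + X]mul1r; apply: lerD.
    exact: IH (ltnW hk).
  exact: He k hk _ (erefl _).
have Hre : forall j, (1 <= j <= jmax)%N -> complex.Re (alpha j) <= 0.
  by move=> j hj'; case: (Hg j hj') => h1 _ _; exact: ltW.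
rewrite (res_id A B alpha v jmax Hre) /res_exact.
set X := w jmax *m ctr (w jmax).
set Xe := we jmax *m ctr (we jmax).
have ec : c *+ jmax = eps by rewrite -mulr_natr /c divfK ?gt_eqF.
have hS : specnorm (\sum_(j < jmax) (gam (alpha j.+1) ^+ 2) *:
        (s j.+1 *m ctr (v j.+1) + v j.+1 *m ctr (s j.+1))) <= eps.
  apply: le_trans (specnorm_sum _ _) _.
  apply: (@le_trans _ _ (\sum_(j < jmax) c)); last by rewrite sumr_const card_ord ec.
  apply: ler_sum => j _.
  rewrite G_real specnormZrE ger0_norm ?g_ge0 //.
  apply: le_trans (Hv j (ltn_ord j)); rewrite ler_wpM2l ?g_ge0 //.
  apply: le_trans (specnormD _ _) _.
  by apply: lerD; apply: le_trans (specnormM _ _) _; rewrite specnorm_ctrE.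
have hX : specnorm (X - Xe) <= eps.
  by have := HX jmax (leqnn _); rewrite -ec mulr_natl.
have hX2 : specnorm X <= specnorm Xe + specnorm (X - Xe).
  have e : X = (X - Xe) + Xe by rewrite subrK.
  rewrite [in specnorm X]e; apply: le_trans (specnormD _ _) _.
  rewrite [X in X <= _]addrC; exact: le_refl.
apply: le_trans (specnormB _ _) _.
apply: le_trans (lerD hX2 hS) _; rewrite -addrA lerD2l.
apply: le_trans (lerD hX (le_refl eps)) _.
have -> : eps + eps = 2 * eps by ring.
exact: le_refl.
Qed.


End Main.
End Vec.


Theorem corollary3p8 (R : realType) (n r jmax : nat)
  (A : 'M[R]_n) (B : 'M[R]_(n, r)) (eps : R)
  (alpha : nat -> R[i]) (v : nat -> 'M[R[i]]_(n, r)) :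
  (1 <= jmax)%N -> 0 < eps -> eps < 1 ->
  (forall j, (1 <= j <= jmax)%N ->
     [/\ complex.Re (alpha j) < 0,
         cmx A + (alpha j)%:M \in unitmx
       & specnorm (cayley (cmx A) (alpha j)) < 1]) ->
  (forall k, (1 <= k <= jmax)%N ->
     let wn := specnorm (adi_w (cmx B) alpha v k.-1) in
     let sigma := specnorm (invmx (cmx A + (alpha k)%:M)) in
     specnorm (adi_s (cmx A) (cmx B) alpha v k)
       <= 2^-1 * (Num.sqrt (wn ^+ 2 + 2 * eps / (sigma * gamr (alpha k) ^+ 2 * jmax%:R))
                  - wn)) ->
  specnorm (res_true (cmx A) (cmx B) alpha v jmax)
    <= specnorm (res_exact (cmx A) (cmx B) alpha jmax) + 2 * eps.
Proof.
move=> hj e0 _ Hg Hs.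
by apply: main_gen => // k hk; apply: Hs.
Qed.
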